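(* Let $d\ge5$ and $k=k_0(d)$, where $k_0(d)=(d+1)/2$ if $d$ is odd and $k_0(d)=d/2+1$ if $d$ is even. Then for every $x>1$, $$\frac{(x+1)f'(x)}{k}<\big(1+\eta(x)\big)f(x).$$
   Context: $f(x)=\binom dk^{-1}\sum_{i=0}^{d-k}\binom ki\binom{d-k}{i}x^{k-i}$ and $\eta(x)=\dfrac{2k-d}{d-k+\sqrt{(d-k)^2+d(2k-d)f(x)}}$. *)

(* Defs.v *)
From mathcomp Require Import all_boot all_order all_algebra.
Set Implicit Arguments. Unset Strict Implicit. Unset Printing Implicit Defensive.
Import Order.TTheory GRing.Theory Num.Theory.
Local Open Scope ring_scope.

Definition k0 (d : nat) : nat := if odd d then (d.+1)./2 else (d./2).+1.

Definition fpoly (R : fieldType) (d k : nat) : {poly R} :=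
  ('C(d, k)%:R)^-1 *:
    \sum_(i < (d - k).+1) ('C(k, i) * 'C(d - k, i))%:R *: 'X^(k - i).

Definition eta (R : rcfType) (d k : nat) (x : R) : R :=
  (2 * k%:R - d%:R) /
    (d%:R - k%:R
     + Num.sqrt ((d%:R - k%:R) ^+ 2 + d%:R * (2 * k%:R - d%:R) * (fpoly R d k).[x])).

(* Main.v *)
Require Import Defs.
From mathcomp Require Import all_boot all_order all_algebra.
From mathcomp Require Import zify ring lra.
Import Order.TTheory GRing.Theory Num.Theory.

Definition acoef k m j := ('C(k, j) * 'C(k + m - j, m))%N.

Lemma acoef_rel k m j : j < k ->
  (k + m - j) * (j.+1 * acoef k m j.+1) = (k - j) ^ 2 * acoef k m j.
Proof.
move=> hj; rewrite /acoef.
have e1 := mul_bin_left k j.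
have e2 := mul_bin_down (k + m - j) m.
have e3 : (k + m - j).-1 = k + m - j.+1 by lia.
have e4 : k + m - j - m = k - j by lia.
rewrite e3 e4 in e2.
rewrite (_ : (k + m - j) * (j.+1 * ('C(k, j.+1) * 'C(k + m - j.+1, m)))
  = (j.+1 * 'C(k, j.+1)) * ((k + m - j) * 'C(k + m - j.+1, m))); last ring.
rewrite e1 e2; ring.
Qed.

Lemma acoef_big k m j : k < j -> acoef k m j = 0.
Proof. by move=> h; rewrite /acoef bin_small. Qed.

Lemma acoef0 k m : acoef k m 0 = 'C(k + m, k).
Proof.
by rewrite /acoef bin0 mul1n subn0 -(bin_sub (leq_addl k m)) addnK.
Qed.

Lemma Hcoef_nat k m i : k <= m + 2 -> 2 <= i ->
  i * acoef k m i + 2 * (i.+1 * acoef k m i.+1) <= k * acoef k m i.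
Proof.
move=> hk hi.
case: (ltnP i k) => hik; last first.
  rewrite (@acoef_big k m i.+1) ?muln0 ?addn0; last lia.
  case: (ltnP k i) => h2; first by rewrite acoef_big // !muln0.
  have -> : i = k by lia. done.
have hr := @acoef_rel k m i hik.
have hpos : 0 < k + m - i by lia.
rewrite -(leq_pmul2l hpos) mulnDr.
rewrite (_ : (k + m - i) * (2 * (i.+1 * acoef k m i.+1)) = 2 * ((k + m - i) * (i.+1 * acoef k m i.+1))); last ring.
rewrite hr.
set a := acoef k m i.
have -> : (k - i) ^ 2 = (k - i) * (k - i) by rewrite expnS expn1.
have h3 : 2 * (k - i) <= k + m - i by lia.
have : (k + m - i) * (i * a) + 2 * ((k - i) * (k - i) * a) <= (k + m - i) * (i * a) + (k + m - i) * ((k - i) * a).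
  rewrite leq_add2l (_ : 2 * ((k - i) * (k - i) * a) = (2 * (k - i)) * ((k - i) * a)); last ring.
  by rewrite leq_mul2r h3 orbT.
move/leq_trans; apply.
rewrite -mulnDr leq_mul2l; apply/orP; right.
rewrite -mulnDl leq_mul2r; apply/orP; right. lia.
Qed.

Local Close Scope ring_scope.
Lemma bin_swap k i j : 'C(k, i) * 'C(k - i, j) = 'C(k, j) * 'C(k - j, i).
Proof.
case: (leqP (i + j) k) => hij; last first.
  have L : 'C(k, i) * 'C(k - i, j) = 0.
    case: (leqP i k) => hi; [rewrite (@bin_small (k - i) j) ?muln0 //; lia|
      rewrite (@bin_small k i) //].
  have R : 'C(k, j) * 'C(k - j, i) = 0.
    case: (leqP j k) => hi; [rewrite (@bin_small (k - j) i) ?muln0 //; lia|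
      rewrite (@bin_small k j) //].
  by rewrite L R.
have hpos : 0 < i`! * j`! * (k - i - j)`! by rewrite !muln_gt0 !fact_gt0.
apply/eqP; rewrite -(eqn_pmul2r hpos); apply/eqP.
have e1 : 'C(k, i) * 'C(k - i, j) * (i`! * j`! * (k - i - j)`!)
   = ('C(k, i) * (i`! * (k - i)`!)) * 1.
  rewrite -(bin_fact (_ : j <= k - i)); last lia.
  rewrite muln1 /= -subnDA. ring.
have e2 : 'C(k, j) * 'C(k - j, i) * (i`! * j`! * (k - i - j)`!)
   = ('C(k, j) * (j`! * (k - j)`!)) * 1.
  rewrite -(bin_fact (_ : i <= k - j)); last lia.
  have -> : k - j - i = k - i - j by lia.
  rewrite muln1. ring.
rewrite e1 e2 !bin_fact //; lia.
Qed.

Lemma key_sum k m j : j <= k ->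
  \sum_(i < m.+1) 'C(k, i) * 'C(m, i) * 'C(k - i, j) = 'C(k, j) * 'C(k + m - j, m).
Proof.
move=> hj.
transitivity (\sum_(i < m.+1) 'C(k, j) * ('C(k - j, i) * 'C(m, m - i))).
  apply: eq_bigr => i _; rewrite bin_sub; last by rewrite -ltnS.
  rewrite mulnAC bin_swap; ring.
rewrite -big_distrr /= binomial.Vandermonde; congr (_ * _); congr 'C(_, _); lia.
Qed.

Lemma key_sum0 k m j : k < j ->
  \sum_(i < m.+1) 'C(k, i) * 'C(m, i) * 'C(k - i, j) = 0.
Proof.
move=> hj; apply: big1 => i _; rewrite (@bin_small (k - i) j) ?muln0 //; lia.
Qed.

Local Open Scope ring_scope.

Lemma coef_XaddCn (R : fieldType) n j : ((('X + 1) : {poly R}) ^+ n)`_j = ('C(n, j))%:R.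
Proof.
rewrite exprD1n coef_sum.
transitivity (\sum_(l < n.+1 | (l == j :> nat)) ('C(n, l))%:R : R).
  rewrite [RHS]big_mkcond /=; apply: eq_bigr => l _.
  by rewrite coefMn coefXn eq_sym; case: eqP => _; rewrite ?mulr1n ?mul0rn.
rewrite (big_ord1_eq _ (fun l => ('C(n, l))%:R : R)); case: ltnP => // h.
by rewrite bin_small.
Qed.

Definition Gp (R : fieldType) k m : {poly R} := \poly_(j < k.+1) (acoef k m j)%:R.

Lemma fpoly_comp (R : fieldType) k m :
  fpoly R (k + m) k \Po ('X + 1) = ('C(k + m, k)%:R)^-1 *: Gp R k m.
Proof.
rewrite /fpoly addKn comp_polyZ; congr (_ *: _).
rewrite raddf_sum /=; apply/polyP => j.
rewrite coef_sum coef_poly.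
under eq_bigr => i _ do rewrite comp_polyZ comp_Xn_poly coefZ coef_XaddCn -natrM.
rewrite -natr_sum.
case: ltnP => hj.
  by rewrite key_sum.
by rewrite key_sum0.
Qed.

Section Core.
Variable R : rcfType.

Lemma mid1 (m y k d a1 a2 b0 b1 : R) : 1 <= m -> 0 < y ->
  k = m + 1 -> d = m + k -> a1 = k ^+ 2 / d -> a2 = (k - 1) ^+ 2 * a1 / (2 * (d - 1)) ->
  b0 = 2 * a1 - k -> b1 = a1 + 4 * a2 - k * a1 ->
  d * (b0 + b1 * y) ^+ 2 + 2 * k * m * (b0 + b1 * y) < k ^+ 2 * 1 * (1 + a1 * y + a2 * y ^+ 2).
Proof.
move=> hm hy -> -> -> -> -> ->.
have hd : 2 * m + 1 != 0 by apply: lt0r_neq0; lra.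
have hd1 : 2 * m != 0 by apply: lt0r_neq0; lra.
rewrite -subr_gt0.
have -> : (m + 1) ^+ 2 * 1 * (1 + (m + 1) ^+ 2 / (m + (m + 1)) * y + 
   (m + 1 - 1) ^+ 2 * ((m + 1) ^+ 2 / (m + (m + 1))) / (2 * (m + (m + 1) - 1)) * y ^+ 2) -
  ((m + (m + 1)) * (2 * ((m + 1) ^+ 2 / (m + (m + 1))) - (m + 1) + ((m + 1) ^+ 2 / (m + (m + 1)) +
   4 * ((m + 1 - 1) ^+ 2 * ((m + 1) ^+ 2 / (m + (m + 1))) / (2 * (m + (m + 1) - 1))) -
   (m + 1) * ((m + 1) ^+ 2 / (m + (m + 1)))) * y) ^+ 2 +
   2 * (m + 1) * m * (2 * ((m + 1) ^+ 2 / (m + (m + 1))) - (m + 1) + ((m + 1) ^+ 2 / (m + (m + 1)) +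
   4 * ((m + 1 - 1) ^+ 2 * ((m + 1) ^+ 2 / (m + (m + 1))) / (2 * (m + (m + 1) - 1))) -
   (m + 1) * ((m + 1) ^+ 2 / (m + (m + 1)))) * y))
   = y * ((m + 1) ^+ 4 / (2 * m + 1) + (m + 1) ^+ 4 * m / (4 * (2 * m + 1)) * y).
  rewrite (_ : m + (m + 1) = 2 * m + 1); last ring.
  rewrite (_ : 2 * m + 1 - 1 = 2 * m); last ring.
  field. by rewrite hd /=; apply: lt0r_neq0; lra.
apply: mulr_gt0 => //.
have h1 : 0 < 2 * m + 1 by lra.
apply: ltr_wpDr.
  apply: mulr_ge0 => //; last lra.
  apply: divr_ge0; last lra.
  apply: mulr_ge0; last lra. apply: exprn_ge0; lra.
apply: divr_gt0 => //. apply: exprn_gt0; lra.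
Qed.

Lemma mid2 (m y k d a1 a2 b0 b1 : R) : 1 <= m -> 0 < y ->
  k = m + 2 -> d = m + k -> a1 = k ^+ 2 / d -> a2 = (k - 1) ^+ 2 * a1 / (2 * (d - 1)) ->
  b0 = 2 * a1 - k -> b1 = a1 + 4 * a2 - k * a1 ->
  d * (b0 + b1 * y) ^+ 2 + 2 * k * m * (b0 + b1 * y) < k ^+ 2 * 2 * (1 + a1 * y + a2 * y ^+ 2).
Proof.
move=> hm hy -> hd -> -> -> ->.
have -> : d = 2 * m + 2 by rewrite hd; ring.
have hd0 : 2 * m + 2 != 0 by apply: lt0r_neq0; lra.
have hd1 : 2 * m + 1 != 0 by apply: lt0r_neq0; lra.
rewrite -subr_gt0.
set e := (_ - _).
have -> : e = y * (2 * (m + 2) ^+ 2 * ((m + 2) ^+ 2 / (2 * m + 2)) * m / (2 * m + 1) +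
   (m + 2) ^+ 2 / (2 * m + 2) * (m + 1) ^+ 2 / (2 * m + 1) * (m + 2) ^+ 2 * (2 * m) / (2 * m + 1) * y).
  rewrite /e (_ : 2 * m + 2 - 1 = 2 * m + 1); last ring.
  field. by rewrite hd0 hd1.
have h1 : 0 < 2 * m + 1 by lra.
have h2 : 0 < 2 * m + 2 by lra.
have h3 : 0 < (m + 2) ^+ 2 by apply: exprn_gt0; lra.
have h4 : 0 < (m + 1) ^+ 2 by apply: exprn_gt0; lra.
apply: mulr_gt0 => //.
apply: ltr_wpDr.
  apply: mulr_ge0; last lra.
  apply: divr_ge0; last lra.
  apply: mulr_ge0; last lra.
  apply: mulr_ge0; last lra.
  apply: divr_ge0; last lra.
  apply: mulr_ge0; last lra.
  apply: divr_ge0; lra.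
apply: divr_gt0 => //.
apply: mulr_gt0; last lra.
apply: mulr_gt0; last apply: divr_gt0 => //.
lra.
Qed.

Lemma core (m c x y F D k d a1 a2 b0 b1 : R) : 1 <= m -> 0 < y -> x = y + 1 ->
  (c = 1 \/ c = 2) -> k = m + c -> d = m + k ->
  a1 = k ^+ 2 / d -> a2 = (k - 1) ^+ 2 * a1 / (2 * (d - 1)) ->
  b0 = 2 * a1 - k -> b1 = a1 + 4 * a2 - k * a1 ->
  1 + a1 * y + a2 * y ^+ 2 <= F -> (y + 2) * D - k * F <= b0 + b1 * y ->
  (x + 1) * D / k < (1 + (2 * k - d) / (d - k + Num.sqrt ((d - k) ^+ 2 + d * (2 * k - d) * F))) * F.
Proof.
move=> hm hy hx hc hk hd ha1 ha2 hb0 hb1 hF hH.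
have hmid : d * (b0 + b1 * y) ^+ 2 + 2 * k * m * (b0 + b1 * y) < k ^+ 2 * c * (1 + a1 * y + a2 * y ^+ 2).
  by case: hc => hc; subst c; [exact: mid1 hm hy hk hd ha1 ha2 hb0 hb1 | exact: mid2 hm hy hk hd ha1 ha2 hb0 hb1].
have hcp : 0 < c by case: hc => ->; lra.
have hkp : 0 < k by lra.
have hdp : 0 < d by lra.
have ha1p : 0 < a1 by rewrite ha1; apply: divr_gt0 => //; apply: exprn_gt0.
have ha2p : 0 <= a2.
  rewrite ha2; apply: divr_ge0; last lra.
  apply: mulr_ge0; [apply: exprn_ge0; lra | lra].
have hFp : 1 < F.
  have : 0 < a1 * y by apply: mulr_gt0.
  have : 0 <= a2 * y ^+ 2 by apply: mulr_ge0 => //; apply: exprn_ge0; lra.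
  lra.
have -> : d - k = m by lra.
have -> : 2 * k - d = c by lra.
set h := (y + 2) * D - k * F.
have -> : (x + 1) * D = h + k * F by rewrite /h hx; ring.
set A := m ^+ 2 + d * c * F.
have hA : 0 <= A by rewrite /A; apply: addr_ge0; [apply: exprn_ge0; lra|
  apply: mulr_ge0; [apply: mulr_ge0; lra | lra]].
set S := Num.sqrt A.
have hS0 : 0 <= S by apply: sqrtr_ge0.
have hS2 : S ^+ 2 = A by rewrite sqr_sqrtr.
have hmS : 0 < m + S by lra.
suff hh : h * (m + S) < k * c * F.
  have hh' : h < k * c * F / (m + S) by rewrite ltr_pdivlMr.
  rewrite ltr_pdivrMr //.
  rewrite (_ : (1 + c / (m + S)) * F * k = F * k + k * c * F / (m + S)); last first.
    by field; apply: lt0r_neq0.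
  lra.
case: (lerP h 0) => h0.
  have : 0 < k * c * F by apply: mulr_gt0; [apply: mulr_gt0|lra].
  have : h * (m + S) <= 0 by apply: mulr_le0_ge0; lra.
  lra.
set U := b0 + b1 * y.
rewrite -/U in hmid.
have hU : h <= U by [].
have step1 : d * h ^+ 2 + 2 * k * m * h <= d * U ^+ 2 + 2 * k * m * U.
  have : 0 <= (U - h) * (d * (U + h) + 2 * k * m).
    apply: mulr_ge0; first lra.
    have : 0 <= d * (U + h) by apply: mulr_ge0; lra.
    have : 0 <= 2 * k * m by apply: mulr_ge0; lra.
    lra.
  rewrite !expr2; nra.
have step2 : k ^+ 2 * c * (1 + a1 * y + a2 * y ^+ 2) <= k ^+ 2 * c * F.
  apply: ler_wpM2l => //; apply: mulr_ge0 => //; [apply: exprn_ge0|]; lra.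
have Q : d * h ^+ 2 + 2 * k * m * h < k ^+ 2 * c * F by lra.
have key : d * h + k * m < k * S.
  have e1 : (d * h + k * m) ^+ 2 < (k * S) ^+ 2.
    rewrite exprMn hS2 /A.
    have : d * (d * h ^+ 2 + 2 * k * m * h) < d * (k ^+ 2 * c * F) by rewrite ltr_pM2l.
    move=> H; rewrite !expr2 in H *. nra.
  have p1 : 0 <= d * h + k * m.
    have : 0 <= d * h by apply: mulr_ge0; lra.
    have : 0 <= k * m by apply: mulr_ge0; lra.
    lra.
  have p2 : 0 <= k * S by apply: mulr_ge0; lra.
  rewrite ltNge; apply/negP => H.
  have := ler_pM p2 p2 H H.
  rewrite !expr2 in e1; lra.
have : d * (h * (m + S)) < d * (k * c * F).
  have e2 : (d * h) * (m + S) < (k * S - k * m) * (m + S) by rewrite ltr_pM2r //; lra.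
  have e3 : (k * S - k * m) * (m + S) = d * (k * c * F).
    rewrite (_ : (k * S - k * m) * (m + S) = k * (S ^+ 2 - m ^+ 2)); last by rewrite !expr2; ring.
    rewrite hS2 /A; ring.
  rewrite -e3 mulrA; exact: e2.
by rewrite ltr_pM2l.
Qed.
End Core.

Section Poly.
Variable R : rcfType.

Lemma coef_Gp k m j : (Gp R k m)`_j = (acoef k m j)%:R.
Proof.
rewrite /Gp coef_poly; case: ltnP => // h.
by rewrite acoef_big.
Qed.

Lemma poly_lb (p : {poly R}) y : 0 <= y -> (forall i, 0 <= p`_i) ->
  p`_0 + p`_1 * y + p`_2 * y ^+ 2 <= p.[y].
Proof.
move=> hy hp; rewrite (@horner_coef_wide _ (size p).+3); last lia.
rewrite !big_ord_recl /= expr0 mulr1 expr1 !addrA lerDl.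
apply: sumr_ge0 => i _; apply: mulr_ge0 => //; last exact: exprn_ge0.

Qed.

Lemma poly_ub (p : {poly R}) y : 0 <= y -> (forall i, (2 <= i)%N -> p`_i <= 0) ->
  p.[y] <= p`_0 + p`_1 * y.
Proof.
move=> hy hp; rewrite (@horner_coef_wide _ (size p).+2); last lia.
rewrite !big_ord_recl /= expr0 mulr1 expr1 addrA gerDl.
apply: sumr_le0 => i _; apply: mulr_le0_ge0; [exact: hp | exact: exprn_ge0].
Qed.

Definition Hp k m : {poly R} := 'X * (Gp R k m)^`() + 2%:R *: (Gp R k m)^`() - k%:R *: Gp R k m.

Lemma coef_Hp k m i : (Hp k m)`_i =
  (if i == 0%N then 0 else (acoef k m i)%:R *+ i) + 2%:R * ((acoef k m i.+1)%:R *+ i.+1)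
   - k%:R * (acoef k m i)%:R.
Proof.
rewrite /Hp coefB coefD coefXM !coefZ !coef_deriv !coef_Gp.
by case: i.
Qed.

Lemma Hp_neg k m i : (k <= m + 2)%N -> (2 <= i)%N -> (Hp k m)`_i <= 0.
Proof.
move=> hk hi; rewrite coef_Hp.
case: eqP => [e|_]; first by rewrite e in hi.
have e : forall a n : nat, (a%:R : R) *+ n = (a * n)%:R by move=> a n; rewrite natrM mulr_natr.
rewrite subr_le0 !e -!natrM -natrD ler_nat.
have := @Hcoef_nat k m i hk hi.
by rewrite [(k * _)%N]mulnC [(i * _)%N]mulnC [(i.+1 * _)%N]mulnC.
Qed.

End Poly.

Lemma k0_split d : (5 <= d)%N -> exists m c : nat,
  [/\ (c == 1%N) || (c == 2%N), (2 <= m)%N, k0 d = (m + c)%N & d = (k0 d + m)%N].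
Proof.
move=> hd; rewrite /k0.
have e := odd_double_half d.
case: (odd d) e => /= e.
  exists d./2, 1%N; split => //; lia.
exists (d./2 - 1)%N, 2%N; split => //; lia.
Qed.

Theorem lemma15 (R : rcfType) (d : nat) (hd : (5 <= d)%N) (x : R) (hx : 1 < x) :
  (x + 1) * ((fpoly R d (k0 d))^`()).[x] / (k0 d)%:R
    < (1 + eta d (k0 d) x) * (fpoly R d (k0 d)).[x].
Proof.
have [m [c [hc hm hk hdk]]] := @k0_split d hd.
rewrite /eta.
move: hk hdk; set k := k0 d => hk hdk.
have -> : fpoly R d k = fpoly R (k + m) k by rewrite -hdk.
set y := x - 1.
have hxy : x = y + 1 by rewrite /y subrK.
have hy : 0 < y by rewrite /y subr_gt0.
set N := ('C(k + m, k))%:R : R.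
have hN : 0 < N by rewrite ltr0n bin_gt0 leq_addr.
have hX1 : (('X + 1 : {poly R})).[y] = x by rewrite !hornerE hxy.
have FE : (fpoly R (k + m) k).[x] = N^-1 * (Gp R k m).[y].
  by rewrite -hX1 -horner_comp fpoly_comp hornerZ.
have DE : ((fpoly R (k + m) k)^`()).[x] = N^-1 * ((Gp R k m)^`()).[y].
  have := deriv_comp (fpoly R (k + m) k) ('X + 1).
  rewrite fpoly_comp derivZ derivD derivX derivC addr0 mulr1 => E.
  by rewrite -{1}hX1 -horner_comp -E hornerZ.
pose A j := (acoef k m j)%:R : R.
have hA0 : A 0%N = N by rewrite /A acoef0.
have hk1 : (1 < k)%N by lia.
have R1 : (k + m)%:R * A 1%N = k%:R ^+ 2 * N.
  have := congr1 (fun n : nat => n%:R : R) (@acoef_rel k m 0 (ltnW hk1)).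
  by rewrite /= !subn0 mul1n (natrM R (k + m) (acoef k m 1)) (natrM R (k ^ 2) (acoef k m 0)) natrX -hA0.
have R2 : ((k + m)%:R - 1) * (2 * A 2%N) = (k%:R - 1) ^+ 2 * A 1%N.
  have := congr1 (fun n : nat => n%:R : R) (@acoef_rel k m 1 hk1).
  rewrite /= (natrM R (k + m - 1)) (natrM R 2) (natrM R ((k - 1) ^ 2)) natrX.
  rewrite (natrB _ (_ : (1 <= k + m)%N)); last lia.
  rewrite (natrB _ (_ : (1 <= k)%N)); last lia.
  by rewrite /A => ->.
have hdR : d%:R = m%:R + k%:R :> R by rewrite hdk natrD addrC.
have hmR : 2 <= m%:R :> R by rewrite (ler_nat R 2 m).
have hkR : k%:R = m%:R + c%:R :> R by rewrite hk natrD.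
have hcR : c%:R = 1 :> R \/ c%:R = 2 :> R.
  by case/orP: hc => /eqP ->; [left | right].
have hcpos : 1 <= c%:R :> R by case: hcR => ->; lra.
pose a1 := k%:R ^+ 2 / d%:R : R.
pose a2 := (k%:R - 1) ^+ 2 * a1 / (2 * (d%:R - 1)) : R.
have hdpos : 2 < d%:R :> R by lra.
have hA1 : A 1%N = N * a1.
  rewrite /a1 hdR (_ : m%:R + k%:R = (k + m)%:R :> R); last by rewrite natrD addrC.
  apply: (mulfI (_ : (k + m)%:R != 0 :> R)); first by rewrite pnatr_eq0; lia.
  rewrite R1; field; rewrite -natrD pnatr_eq0; lia.
have hA2 : A 2%N = N * a2.
  have e : d%:R - 1 = (k + m)%:R - 1 :> R by rewrite hdk.
  apply: (mulfI (_ : 2 * ((k + m)%:R - 1) != 0 :> R)).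
    apply: lt0r_neq0; rewrite -e; lra.
  rewrite (_ : 2 * ((k + m)%:R - 1) * A 2%N = ((k + m)%:R - 1) * (2 * A 2%N)); last ring.
  rewrite R2 hA1 /a2 e; field.
  by apply: lt0r_neq0; lra.
apply: (@core R m%:R c%:R x y _ _ k%:R d%:R a1 a2 _ _ _ hy hxy hcR hkR hdR erefl erefl erefl erefl).
- lra.
- rewrite FE.
  have := @poly_lb R (Gp R k m) y (ltW hy) (fun i => ltac:(rewrite coef_Gp; exact: ler0n)).
  rewrite !coef_Gp -/(A 0%N) -/(A 1%N) -/(A 2%N) hA0 hA1 hA2 => H.
  rewrite -(ler_pM2l hN) (mulrA N N^-1) (mulfV (lt0r_neq0 hN)) mul1r.
  rewrite (_ : N * (1 + a1 * y + a2 * y ^+ 2) = N + N * a1 * y + N * a2 * y ^+ 2); [exact: H | ring].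
- rewrite FE DE.
  have hk2 : (k <= m + 2)%N by case/orP: hc => /eqP hc; lia.
  have := @poly_ub R (Hp R k m) y (ltW hy) (fun i hi => @Hp_neg R k m i hk2 hi).
  rewrite !coef_Hp /= -/(A 0%N) -/(A 1%N) -/(A 2%N) hA0 hA1 hA2.
  have -> : (Hp R k m).[y] = (y + 2) * ((Gp R k m)^`()).[y] - k%:R * (Gp R k m).[y].
    rewrite /Hp hornerD hornerN hornerD hornerM hornerX !hornerZ; ring.
  move=> H.
  rewrite -(ler_pM2l hN).
  rewrite (_ : N * ((y + 2) * (N^-1 * (Gp R k m)^`().[y]) - k%:R * (N^-1 * (Gp R k m).[y]))
     = (y + 2) * (Gp R k m)^`().[y] - k%:R * (Gp R k m).[y]); last first.
    by field; exact: lt0r_neq0 hN.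
  apply: (le_trans H).
  rewrite !mulr1n !mulr2n le_eqVlt; apply/orP; left; apply/eqP; ring.
Qed.
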